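(* For every rewritable 1qfa $M$ with quantum advice $\Psi=\{|\phi_n\rangle\}_{n\in\mathbb N}$, there exist another rewritable 1qfa $N$ (with the same input alphabet and with state set, accepting set and advice-track alphabet of its own) and quantum advice $\Psi'=\{|\phi'_n\rangle\}_{n\in\mathbb N}$ for $N$ such that (i) $N$ performs a measurement only once, just after scanning the entire input, i.e., its acceptance probability on $x=x_1\cdots x_n$ is $\|P_{acc}U^{(n)}_{x_n}\cdots U^{(1)}_{x_1}|q_0\rangle|\phi'_n\rangle\|^2$ (with $U^{(i)}_\sigma$, $P_{acc}$, $q_0$ those of $N$), and (ii) for every input $x$ this acceptance probability of $N$ with $\Psi'$ equals the acceptance probability $p_{acc}(x,\phi_n)$ of $M$ with $\Psi$.
   Context: Rewritable 1qfa: finite state set $Q$ with $q_0\in Q$ and disjoint $Q_{acc},Q_{rej}\subseteq Q$ ($Q_{non}$ the rest), input alphabet $\Sigma$, finite advice-track alphabet $\Gamma$, and for each $\sigma\in\Sigma$, $i\ge1$ a unitary $V^{(i)}_\sigma$ on $\mathrm{span}\{|q\rangle:q\in Q\}\otimes\mathrm{span}\{|\tau\rangle:\tau\in\Gamma\}$. For $n\ge1$, on $E_n=\mathrm{span}\{|q\rangle|y\rangle:q\in Q,y\in\Gamma^n\}$ let $U^{(i)}_\sigma$ ($1\le i\le n$) act as $V^{(i)}_\sigma$ on the state register and the $i$-th advice symbol (which may be changed) and as identity on other advice symbols; the input track is read-only. $P_{acc},P_{rej},P_{non}$ are projections on the state register; $T^{(i)}_\sigma=P_{non}U^{(i)}_\sigma$.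 Quantum advice: unit vectors $|\phi_n\rangle\in\mathrm{span}\{|y\rangle:y\in\Gamma^n\}$. For $x=x_1\cdots x_n\in\Sigma^n$ ($n\ge1$), the (measure-many) acceptance probability is $p_{acc}(x,\phi_n)=\sum_{i=1}^n\|P_{acc}U^{(i)}_{x_i}T^{(i-1)}_{x_{i-1}}\cdots T^{(1)}_{x_1}|q_0\rangle|\phi_n\rangle\|^2$. *)

(* Defs.v *)
From HB Require Import structures.
From mathcomp Require Import all_boot all_order all_algebra.
From mathcomp Require Import complex.
From mathcomp Require Import Rstruct.
Set Implicit Arguments. Unset Strict Implicit. Unset Printing Implicit Defensive.
Import Order.TTheory GRing.Theory Num.Theory.
Local Open Scope ring_scope.
Local Open Scope complex_scope.

Definition C : Type := (Rdefinitions.R)[i].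

(* vectors of a finite-dimensional Hilbert space with orthonormal basis
   indexed by the finite type T *)
Definition vec (T : finType) := T -> C.

Definition norm2 (T : finType) (v : vec T) : C := \sum_(t : T) `|v t| ^+ 2.

(* an operator on span{|t> : t in T}, given by its matrix entries
   A t' t = <t'|A|t>; unitary: A^dagger A = I and A A^dagger = I *)
Definition unitary (T : finType) (A : T -> T -> C) : Prop :=
  (forall a b : T, \sum_(c : T) (A c a)^* * A c b = (a == b)%:R) /\
  (forall a b : T, \sum_(c : T) A a c * (A b c)^* = (a == b)%:R).

(* A rewritable 1qfa over input alphabet Sigma.
   V s i (q',g') (q,g) = <q',g'| V^{(i)}_s |q,g>  (only i >= 1 is used). *)
Record rqfa (Sigma : finType) := Rqfa {
  st : finType;
  adv : finType;
  q0 : st;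
  Qacc : {set st};
  Qrej : {set st};
  Qdisj : [disjoint Qacc & Qrej];
  V : Sigma -> nat -> st * adv -> st * adv -> C;
  V_unitary : forall (s : Sigma) (i : nat), unitary (V s i)
}.

Section Machine.
Variables (Sigma : finType) (M : rqfa Sigma).

Definition track (n : nat) := {ffun 'I_n -> adv M}.

Definition Estate (n : nat) := vec (st M * track n)%type.

Definition advice_vec (n : nat) := vec (track n).

(* U^{(j+1)}_s on E_n, for j : 'I_n (0-based position j = 1-based position j+1):
   acts as V^{(j+1)}_s on the state register and the (j+1)-th advice symbol *)
Definition Uop (n : nat) (j : 'I_n) (s : Sigma) (psi : Estate n) : Estate n :=
  fun qy => let: (q', y') := qy in
    \sum_(qg : st M * adv M)
      @V Sigma M s j.+1 (q', y' j) qg * psi (qg.1, finfun (fun k => if k == j then qg.2 else y' k)).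

Definition Proj (n : nat) (S : {set st M}) (psi : Estate n) : Estate n :=
  fun qy => if qy.1 \in S then psi qy else 0.

Definition Qnon : {set st M} := ~: (Qacc M :|: Qrej M).

Definition init (n : nat) (phi : advice_vec n) : Estate n :=
  fun qy => (qy.1 == q0 M)%:R * phi qy.2.

Fixpoint runT (n : nat) (x : n.-tuple Sigma) (phi : advice_vec n) (k : nat)
  : Estate n :=
  match k with
  | 0 => init phi
  | k'.+1 => match insub k' : option 'I_n with
             | Some j => Proj Qnon (Uop j (tnth x j) (runT x phi k'))
             | None => runT x phi k'
             end
  end.

Fixpoint runU (n : nat) (x : n.-tuple Sigma) (phi : advice_vec n) (k : nat)
  : Estate n :=
  match k with
  | 0 => init phi
  | k'.+1 => match insub k' : option 'I_n with
             | Some j => Uop j (tnth x j) (runU x phi k')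
             | None => runU x phi k'
             end
  end.

Definition pacc_mm (n : nat) (x : n.-tuple Sigma) (phi : advice_vec n) : C :=
  \sum_(j < n) norm2 (Proj (Qacc M) (Uop j (tnth x j) (runT x phi j))).

Definition pacc_mo (n : nat) (x : n.-tuple Sigma) (phi : advice_vec n) : C :=
  norm2 (Proj (Qacc M) (runU x phi n)).

Definition quantum_advice (Psi : forall n : nat, advice_vec n) : Prop :=
  forall n : nat, (0 < n)%N -> norm2 (Psi n) = 1.

End Machine.

(* Main.v *)
Require Import Defs.
From HB Require Import structures.
From mathcomp Require Import all_boot all_order all_algebra complex Rstruct.
Set Implicit Arguments. Unset Strict Implicit. Unset Printing Implicit Defensive.
Import Order.TTheory GRing.Theory Num.Theory.
Local Open Scope ring_scope.
Local Open Scope complex_scope.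
Lemma unitary_reidx (S T : finType) (A : T -> T -> C) (f g : S -> T) :
  bijective f -> bijective g -> unitary A -> unitary (fun a b => A (f a) (g b)).
Proof.
move=> bf bg [U1 U2]; split=> a b.
- rewrite -(inj_eq (bij_inj bg)) -(U1 (g a) (g b)).
  by rewrite (reindex f) //=; apply: onW_bij.
- rewrite -(inj_eq (bij_inj bf)) -(U2 (f a) (f b)).
  by rewrite (reindex g) //=; apply: onW_bij.
Qed.

Lemma unitary_id (T : finType) : unitary (fun a b : T => (a == b)%:R : (Rdefinitions.R)[i]).
Proof.
split=> a b.
- rewrite (bigD1 a) //= big1 ?addr0; last by move=> c /negbTE ->; rewrite conjC0 mul0r.
  by rewrite eqxx conjC1 mul1r.
- rewrite (bigD1 a) //= big1 ?addr0; last by move=> c; rewrite eq_sym => /negbTE ->; rewrite mul0r.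
  by rewrite eqxx mul1r eq_sym conjC_nat.
Qed.

Lemma sum_pair (R : nmodType) (T B: finType) (G : T * B -> R) :
  \sum_c G c = \sum_t \sum_b G (t, b).
Proof. by rewrite pair_bigA; apply: eq_bigr => -[]. Qed.

Lemma unitary_ctrl (T B : finType) (A : B -> T -> T -> C) :
  (forall b, unitary (A b)) ->
  unitary (fun (x y : T * B) => (x.2 == y.2)%:R * A y.2 x.1 y.1).
Proof.
move=> UA; split=> -[a a2] [b b2] /=.
- rewrite sum_pair exchange_big /= (bigD1 a2) //= [X in _ + X]big1 ?addr0; last first.
    by move=> c /negbTE Hc; apply: big1 => t _; rewrite Hc mul0r conjC0 mul0r.
  rewrite xpair_eqE; have [e|ne] := eqVneq a2 b2; first subst b2.
    under eq_bigr do rewrite eqxx mulr1n !mul1r.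
    by rewrite (proj1 (UA a2)) andbT.
  rewrite andbF; apply: big1 => t _.
  by rewrite mul0r mulr0.
- rewrite sum_pair exchange_big /= (bigD1 a2) //= [X in _ + X]big1 ?addr0; last first.
    by move=> c Hc; apply: big1 => t _; rewrite eq_sym (negbTE Hc) mul0r mul0r.
  rewrite xpair_eqE; have [e|ne] := eqVneq a2 b2; first subst b2.
    under eq_bigr do rewrite eqxx mulr1n !mul1r.
    by rewrite (proj2 (UA a2)) andbT.
  rewrite andbF; apply: big1 => t _.
  by rewrite mul0r conjC0 mulr0.
Qed.

Notation Ci := ((Rdefinitions.R)[i]).

Section Constr.
Variables (Sigma : finType) (M : rqfa Sigma).

Definition Hs : {set st M} := Qacc M :|: Qrej M.
Definition st' := (st M * bool)%type.
Definition adv' := (adv M * bool)%type.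

Definition wf (a : st' * adv') : st' * adv' :=
  let: ((q, d), (g, m)) := a in
  if (q \in Hs) && (d == m) then ((q, ~~ d), (g, ~~ m)) else ((q, d), (g, m)).

Lemma wfK : involutive wf.
Proof.
move=> [[q d] [g m]] /=; case: ifP => /= [/andP[-> /eqP->]|-> //].
by rewrite eqxx /= !negbK.
Qed.

Definition fp (a : st' * adv') : (st M * adv M) * (bool * bool) :=
  let: ((q, d), (g, m)) := a in ((q, g), (d, m)).
Definition fpi (b : (st M * adv M) * (bool * bool)) : st' * adv' :=
  let: ((q, g), (d, m)) := b in ((q, d), (g, m)).
Lemma fp_bij : bijective fp.
Proof. by exists fpi => [[[? ?] [? ?]]|[[? ?] [? ?]]]. Qed.

Definition Actl (s : Sigma) (i : nat) (b : bool * bool) (x y : st M * adv M) : Ci :=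
  if b.1 then (x == y)%:R else V s i x y.
Definition CA s i (x y : (st M * adv M) * (bool * bool)) : Ci :=
  (x.2 == y.2)%:R * Actl s i y.2 x.1 y.1.
Definition V' s i (a' a : st' * adv') : Ci := CA s i (fp (wf a')) (fp a).

Lemma V'_unitary s i : unitary (V' s i).
Proof.
apply: (@unitary_reidx _ _ (CA s i) (fp \o wf) fp).
- apply: bij_comp; first exact: fp_bij. exact: inv_bij wfK.
- exact: fp_bij.
apply: (@unitary_ctrl _ _ (fun b => Actl s i b)) => b.
rewrite /Actl; case: b.1; first exact: unitary_id.
exact: V_unitary.
Qed.

Definition Qacc' : {set st'} := [set a | a.2 && (a.1 \in Qacc M)].
Lemma disj' : [disjoint Qacc' & (set0 : {set st'})].
Proof. by rewrite disjoints_subset setC0 subsetT. Qed.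

Definition N : rqfa Sigma :=
  @Rqfa Sigma st' adv' (q0 M, false) Qacc' set0 disj' V' V'_unitary.

End Constr.

Section Sim.
Variables (Sigma : finType) (M : rqfa Sigma).
Local Notation N := (N M).
Local Notation adv' := (adv' M).
Local Notation st' := (st' M).

Definition upd (T : Type) n (y : {ffun 'I_n -> T}) (j : 'I_n) (c : T) :=
  [ffun k => if k == j then c else y k].

Lemma sum_bool (G : bool -> Ci) : \sum_b G b = G true + G false.
Proof. by rewrite big_bool. Qed.

Lemma UopN n (psi : Estate N n) (j : 'I_n) s (c : st') (y' : track N n) a :
  a = wf (c, y' j) ->
  Uop j s psi (c, y') =
  let: ((aq, ad), (ag, am)) := a in
  if ad then psi ((aq, true), upd y' j (ag, am))
  else \sum_(qg : st M * adv M) V s j.+1 (aq, ag) qg *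
         psi ((qg.1, false), upd y' j (qg.2, am)).
Proof.
move=> ea; rewrite /Uop /= {1}/V' -ea.
case: a {ea} => [[aq ad] [ag am]] /=.
case: ad.
  rewrite (bigD1 ((aq, true), (ag, am))) //= big1 ?addr0.
    by rewrite /CA /Actl /upd /= !eqxx !mulr1n !mul1r.
  move=> [[q d] [g m]] /=; rewrite /CA /Actl /=.
  case: (eqVneq (true, am) (d, m)) => [[<- <-]|ne2]; last by rewrite mul0r mul0r.
  case: (eqVneq (aq, ag) (q, g)) => [[<- <-]|]; last by rewrite mulr0 mul0r.
  by rewrite eqxx.
rewrite (bigID (fun qg : st' * adv' => (qg.1.2 == false) && (qg.2.2 == am))) /=.
rewrite [X in _ + X]big1 ?addr0; last first.
  move=> [[q d] [g m]] /= /nandP H; rewrite /CA /Actl /=.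
  case: (eqVneq (false, am) (d, m)) => [[e1 e2]|]; last by rewrite !mul0r.
  by case: H; rewrite -?e1 -?e2 eqxx.
rewrite (reindex_onto (fun qg : st M * adv M => ((qg.1, false), (qg.2, am)))
                      (fun qg : st' * adv' => (qg.1.1, qg.2.1))) /=; last first.
  by move=> [[q d] [g m]] /= /andP[/eqP-> /eqP->].
rewrite (eq_bigl xpredT); last by move=> [q g]; rewrite /= !eqxx.
apply: eq_bigr => -[q g] _ /=.
by rewrite /CA /Actl /upd /= !eqxx !mulr1n !mul1r.
Qed.


Definition fstt n (y' : {ffun 'I_n -> adv'}) : {ffun 'I_n -> adv M} := [ffun k => (y' k).1].
Definition sndt n (y' : {ffun 'I_n -> adv'}) : {ffun 'I_n -> bool} := [ffun k => (y' k).2].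

Lemma bool_mul (b : bool) (z : Ci) : b%:R * z = if b then z else 0.
Proof. by case: b; rewrite ?mul1r ?mul0r. Qed.

Lemma sum_marks n (m : {ffun 'I_n -> bool}) (F : {ffun 'I_n -> adv M} -> Ci) :
  \sum_(y' : {ffun 'I_n -> adv'}) (sndt y' == m)%:R * F (fstt y') = \sum_y F y.
Proof.
under eq_bigr do rewrite bool_mul.
rewrite -big_mkcond /=.
rewrite (reindex_onto (fun y : {ffun 'I_n -> adv M} => [ffun k => (y k, m k)]) (@fstt n)) /=;
  last first.
  move=> y' /eqP <-; apply/ffunP => k; rewrite !ffunE.
  by case: (y' k).
apply: eq_big => [y|y _].
  have -> : fstt [ffun k => (y k, m k)] = y by apply/ffunP => k; rewrite !ffunE.
  rewrite eqxx andbT; apply/eqP/ffunP => k; by rewrite !ffunE.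
have -> // : fstt [ffun k => (y k, m k)] = y by apply/ffunP => k; rewrite !ffunE.
Qed.

Lemma fstt_upd n (y' : {ffun 'I_n -> adv'}) j g m :
  fstt (upd y' j (g, m)) = upd (fstt y') j g.
Proof. by apply/ffunP => k; rewrite !ffunE; case: (k == j). Qed.

Lemma sndt_upd n (y' : {ffun 'I_n -> adv'}) j g m :
  sndt (upd y' j (g, m)) = upd (sndt y') j m.
Proof. by apply/ffunP => k; rewrite !ffunE; case: (k == j). Qed.

Lemma upd_id (T : Type) n (y : {ffun 'I_n -> T}) j : upd y j (y j) = y.
Proof. by apply/ffunP => k; rewrite !ffunE; case: eqP => [->|]. Qed.

Definition ef n (j : 'I_n) : {ffun 'I_n -> bool} := [ffun k => k == j].

Lemma mark_ne n (mk : {ffun 'I_n -> bool}) (i j : 'I_n) :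
  mk j = true -> i != j -> (mk == ef i) = false.
Proof.
move=> mj nij; apply/negbTE/eqP => h; move: mj; rewrite h ffunE.
by rewrite eq_sym (negbTE nij).
Qed.

Lemma mark_ne2 n (mk : {ffun 'I_n -> bool}) (j : 'I_n) :
  mk j = false -> (mk == ef j) = false.
Proof. by move=> mj; apply/negbTE/eqP => h; move: mj; rewrite h ffunE eqxx. Qed.

Lemma mark0_upd n (mk : {ffun 'I_n -> bool}) (j : 'I_n) :
  (upd mk j true == [ffun => false]) = false.
Proof. by apply/negbTE/eqP => /ffunP /(_ j); rewrite /upd !ffunE eqxx. Qed.

Lemma mark0_upd2 n (mk : {ffun 'I_n -> bool}) (j : 'I_n) :
  mk j = true -> (upd mk j false == [ffun => false]) = (mk == ef j).
Proof.
move=> mj; apply/eqP/eqP => h; apply/ffunP => k.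
  move/ffunP: h => /(_ k); rewrite /upd !ffunE.
  have [-> _|nkj] := eqVneq k j; first by rewrite mj.
  by move=> <-.
rewrite /upd !ffunE; have [//|nkj] := eqVneq k j.
by rewrite h ffunE (negbTE nkj).
Qed.

End Sim.

Lemma runU_S (Sigma : finType) (M0 : rqfa Sigma) n (x : n.-tuple Sigma)
  (phi : advice_vec M0 n) k (lt : (k < n)%N) :
  runU x phi k.+1 = Uop (Ordinal lt) (tnth x (Ordinal lt)) (runU x phi k).
Proof. by rewrite /= insubT. Qed.

Lemma runT_S (Sigma : finType) (M0 : rqfa Sigma) n (x : n.-tuple Sigma)
  (phi : advice_vec M0 n) k (lt : (k < n)%N) :
  runT x phi k.+1 =
  Proj (Qnon M0) (Uop (Ordinal lt) (tnth x (Ordinal lt)) (runT x phi k)).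
Proof. by rewrite /= insubT. Qed.

Arguments Uop : simpl never.
Arguments Proj : simpl never.

Section Inv.
Variables (Sigma : finType) (M : rqfa Sigma) (n : nat) (x : n.-tuple Sigma)
  (phi : advice_vec M n).
Local Notation N := (N M).

Definition phi' : advice_vec N n :=
  fun y' => (sndt y' == [ffun => false])%:R * phi (fstt y').

Definition Dj (j : 'I_n) := Uop j (tnth x j) (runT x phi j).
Arguments Dj : simpl never.

Lemma inv k : (k <= n)%N -> forall q (y' : track N n),
  runU x phi' k ((q, false), y') =
    (sndt y' == [ffun => false])%:R * runT x phi k (q, fstt y') /\
  runU x phi' k ((q, true), y') =
    \sum_(j < n | (j < k)%N) (sndt y' == ef j)%:R * ((q \in Hs M)%:R * Dj j (q, fstt y')).
Proof.
elim: k => [_|k IH lekn] q y'.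
  rewrite /= /init /phi' /=; split.
    by rewrite xpair_eqE andbT mulrCA.
  by rewrite big1 // xpair_eqE andbF mul0r.
have ltkn : (k < n)%N by [].
have {IH}IH := IH (ltnW ltkn).
rewrite (runU_S _ _ ltkn) (runT_S _ _ ltkn).
set j := Ordinal ltkn.
have Dj_def : Dj j = Uop j (tnth x j) (runT x phi k) by [].
case E: (y' j) => [g0 m0].
rewrite (UopN _ _ (erefl (wf ((q, false), y' j)))).
rewrite (UopN _ _ (erefl (wf ((q, true), y' j)))).
rewrite E /=.
have sj : sndt y' j = m0 by rewrite ffunE E.
have fj : fstt y' j = g0 by rewrite ffunE E.
have HL : forall (qg : st M * adv M) m,
    runU x phi' k ((qg.1, false), upd y' j (qg.2, m)) =
    (upd (sndt y') j m == [ffun => false])%:R * runT x phi k (qg.1, upd (fstt y') j qg.2).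
  by move=> qg m; rewrite (IH _ _).1 sndt_upd fstt_upd.
have HD : forall q1 g m,
    runU x phi' k ((q1, true), upd y' j (g, m)) =
    \sum_(i < n | (i < k)%N) (upd (sndt y') j m == ef i)%:R *
       ((q1 \in Hs M)%:R * Dj i (q1, upd (fstt y') j g)).
  by move=> q1 g m; rewrite (IH _ _).2 sndt_upd fstt_upd.
have HU : Uop j (tnth x j) (runT x phi k) (q, fstt y') =
    \sum_qg V (tnth x j) k.+1 (q, g0) qg * runT x phi k (qg.1, upd (fstt y') j qg.2).
  by rewrite /Uop fj.
have Hsum : forall F : 'I_n -> Ci,
    \sum_(i < n | (i < k.+1)%N) F i = F j + \sum_(i < n | (i < k)%N) F i.
  move=> F; rewrite (bigD1 j) //=; congr (_ + _); apply: eq_bigl => i.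
  by rewrite -val_eqE /= ltnS; case: ltngtP.
have yid : upd y' j (g0, m0) = y' by rewrite -E upd_id.
have Hprj : Proj (Qnon M) (Uop j (tnth x j) (runT x phi k)) (q, fstt y') =
    if q \in Hs M then 0 else Uop j (tnth x j) (runT x phi k) (q, fstt y').
  by rewrite /Proj /Qnon /= in_setC; case: (q \in Hs M).
rewrite Hprj Hsum; case Hq: (q \in Hs M).
- case: m0 E sj yid HL HD => E sj yid HL HD /=; split.
  + under eq_bigr do rewrite HL mark0_upd mul0r mulr0.
    by rewrite big1 // mulr0.
  + under eq_bigr do rewrite HL (mark0_upd2 sj) mulrCA.
    rewrite -mulr_sumr -HU -Dj_def mul1r [X in _ + X]big1 ?addr0 // => i /= lik.
    rewrite (@mark_ne _ (sndt y') i j) ?mul0r //.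
    by rewrite -val_eqE /= ltn_eqF.
  + rewrite HD big1 ?mulr0 // => i /= lik.
    rewrite (@mark_ne _ (upd (sndt y') j true) i j) ?mul0r //.
      by rewrite /upd ffunE eqxx.
    by rewrite -val_eqE /= ltn_eqF.
  + rewrite (@mark_ne2 _ (sndt y') j) // mul0r add0r.
    by rewrite yid (IH _ _).2 Hq.
- rewrite /=; split.
  + under eq_bigr do rewrite HL.
    have -> : upd (sndt y') j m0 = sndt y' by rewrite -sj upd_id.
    under eq_bigr do rewrite mulrCA.
    by rewrite -mulr_sumr -HU.
  + by rewrite yid (IH _ _).2 Hq mul0r mulr0 add0r.
Qed.

Lemma normb (b : bool) (z : Ci) : `|b%:R * z| ^+ 2 = b%:R * `|z| ^+ 2.
Proof. by case: b; rewrite ?mul1r ?mul0r ?normr0 ?expr0n. Qed.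

Lemma norm_excl (I : finType) (c : I -> bool) (X : I -> Ci) (P : pred I) :
  (forall i j, c i -> c j -> i = j) ->
  `|\sum_(i | P i) (c i)%:R * X i| ^+ 2 = \sum_(i | P i) (c i)%:R * `|X i| ^+ 2.
Proof.
move=> ex; case: (pickP (fun i => P i && c i)) => [i /andP[Pi ci]|none].
  rewrite (bigD1 i) //= [in RHS](bigD1 i) //= !big1 ?addr0 ?ci ?normb //.
    by move=> j /andP[_ nji]; case cj: (c j); rewrite ?mul0r //; move: nji; rewrite (ex _ _ cj ci) eqxx.
  by move=> j /andP[_ nji]; case cj: (c j); rewrite ?mul0r //; move: nji; rewrite (ex _ _ cj ci) eqxx.
rewrite !big1 ?normr0 ?expr0n // => i Pi; have := none i; rewrite Pi /= => ->; by rewrite mul0r.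
Qed.

Lemma final : pacc_mo x phi' = pacc_mm x phi.
Proof.
rewrite /pacc_mo /pacc_mm /norm2 /Proj.
rewrite (@sum_pair Ci) (@sum_pair Ci).
under [RHS]eq_bigr do rewrite (@sum_pair Ci).
rewrite [RHS]exchange_big /=; apply: eq_bigr => q _.
rewrite sum_bool /Qacc' !inE /=.
rewrite [X in _ + X]big1 ?addr0; last by move=> b _; rewrite normr0 expr0n.
have exf : forall (b : track N n) (i j : 'I_n),
    sndt b == ef i -> sndt b == ef j -> i = j.
  move=> b i j /eqP -> /eqP /ffunP /(_ i); rewrite !ffunE eqxx.
  by move/esym/eqP.
case Hq: (q \in Qacc M); last first.
  transitivity (0 : Ci); first by apply: big1 => b _; rewrite normr0 expr0n.
  by symmetry; apply: big1 => i _; apply: big1 => b _; rewrite normr0 expr0n.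
have HsT : (q \in Hs M) by rewrite /Hs in_setU Hq.
under eq_bigr do rewrite ((inv (leqnn n) _ _).2) (norm_excl _ _ (exf _)).
rewrite exchange_big /= big_mkcond /=; apply: eq_bigr => j _; rewrite ltn_ord.
rewrite (sum_marks (ef j) (fun y => `|(q \in Hs M)%:R * Dj j (q, y)| ^+ 2)).
by apply: eq_bigr => y _; rewrite HsT mul1r.
Qed.
End Inv.

Theorem lemma5p7 (Sigma : finType) (M : rqfa Sigma)
  (Psi : forall n : nat, advice_vec M n) :
  quantum_advice Psi ->
  exists (N : rqfa Sigma) (Psi' : forall n : nat, advice_vec N n),
    quantum_advice Psi' /\
    forall (n : nat) (x : n.-tuple Sigma), (0 < n)%N ->
      pacc_mo x (Psi' n) = pacc_mm x (Psi n).
Proof.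
move=> HPsi; exists (N M), (fun n => phi' (Psi n)); split.
  move=> n n0; rewrite /norm2 /phi'.
  under eq_bigr do rewrite normb.
  rewrite (sum_marks [ffun => false] (fun y => `|Psi n y| ^+ 2)).
  exact: HPsi.
by move=> n x _; apply: final.
Qed.
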